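(* Let $\mathbf M\in\mathbb C^{m\times m}$ and $\mathbf N\in\mathbb C^{n\times n}$ be Hermitian positive definite, let $\mathbf A\in\mathbb C^{m\times n}$ with $\operatorname{rank}\mathbf A=r<\min\{m,n\}$, and put $\mathbf A^{\sharp}=\mathbf N^{-1}\mathbf A^{*}\mathbf M$. Then the weighted Moore–Penrose inverse $\mathbf A^{+}_{M,N}=(\tilde a^{+}_{ij})\in\mathbb C^{n\times m}$ satisfies, for all $i=1,\dots,n$, $j=1,\dots,m$, \[ \tilde a^{+}_{ij}=\frac{\sum_{\beta\in J_{r,n}\{i\}}\left|\left((\mathbf A^{\sharp}\mathbf A)_{.i}(\mathbf a^{\sharp}_{.j})\right)^{\beta}_{\beta}\right|}{\sum_{\beta\in J_{r,n}}\left|(\mathbf A^{\sharp}\mathbf A)^{\beta}_{\beta}\right|}, \] where $\mathbf a^{\sharp}_{.j}$ is the $j$-th column of $\mathbf A^{\sharp}$.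
   Context: All matrices are complex; $\mathbf M^{*}$ is the conjugate transpose. The weighted Moore–Penrose inverse $\mathbf A^{+}_{M,N}$ of $\mathbf A\in\mathbb C^{m\times n}$ is the unique $\mathbf X\in\mathbb C^{n\times m}$ with $\mathbf A\mathbf X\mathbf A=\mathbf A$, $\mathbf X\mathbf A\mathbf X=\mathbf X$, $(\mathbf M\mathbf A\mathbf X)^{*}=\mathbf M\mathbf A\mathbf X$, $(\mathbf N\mathbf X\mathbf A)^{*}=\mathbf N\mathbf X\mathbf A$. For a square matrix $\mathbf P$, $\mathbf P_{.i}(\mathbf c)$ is the matrix obtained from $\mathbf P$ by replacing its $i$-th column by the column vector $\mathbf c$. For $1\le k\le p$, $J_{k,p}$ is the set of strictly increasing sequences $(\beta_1<\dots<\beta_k)$ of elements of $\{1,\dots,p\}$ and $J_{k,p}\{i\}=\{\beta\in J_{k,p}: i\in\beta\}$. For $\beta\in J_{k,p}$, $\mathbf P^{\beta}_{\beta}$ is the principal submatrix with rows and columns indexed by $\beta$, and $|\cdot|$ denotes the determinant. *)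

(* Defs.v *)
From HB Require Import structures.
From mathcomp Require Import all_boot all_order all_algebra.
Set Implicit Arguments. Unset Strict Implicit. Unset Printing Implicit Defensive.
Import Order.TTheory GRing.Theory Num.Theory.
Local Open Scope ring_scope.

Definition ctmx (C : numClosedFieldType) m n (A : 'M[C]_(m, n)) : 'M[C]_(n, m) :=
  (map_mx Num.conj A)^T.

Definition hpd (C : numClosedFieldType) m (M : 'M[C]_m) : Prop :=
  ctmx M = M /\ forall x : 'cV[C]_m, x != 0 -> 0 < (ctmx x *m M *m x) 0 0.

Definition is_wmp_inverse (C : numClosedFieldType) m n
  (M : 'M[C]_m) (N : 'M[C]_n) (A : 'M[C]_(m, n)) (X : 'M[C]_(n, m)) : Prop :=
  [/\ A *m X *m A = A, X *m A *m X = X,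
      ctmx (M *m A *m X) = M *m A *m X & ctmx (N *m X *m A) = N *m X *m A].

Definition replace_col (C : numClosedFieldType) n (P : 'M[C]_n) (i : 'I_n)
  (c : 'cV[C]_n) : 'M[C]_n :=
  \matrix_(k, l) (if l == i then c k 0 else P k l).

(* |P^beta_beta|: principal minor with rows/columns indexed by beta (in
   increasing order, via enum_val). *)
Definition pminor (C : numClosedFieldType) n (P : 'M[C]_n) (beta : {set 'I_n}) : C :=
  \det (\matrix_(k < #|beta|, l < #|beta|)
          P (enum_val k) (enum_val l)).

(* Main.v *)
Require Import Defs.
From HB Require Import structures.
From mathcomp Require Import all_boot all_order all_algebra.
From mathcomp Require Import perm zify ring.
Import Order.TTheory GRing.Theory Num.Theory.
Local Open Scope ring_scope.

Module Helpers.
Set Implicit Arguments. Unset Strict Implicit. Unset Printing Implicit Defensive.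

Section Det.
Variable R : comNzRingType.

Lemma det_mxsub_inj m n (g : 'I_m -> 'I_n) (A : 'M[R]_n) :
  m = n -> injective g -> \det (mxsub g g A) = \det A.
Proof.
move=> e; subst m => ginj.
pose p := perm ginj.
have -> : mxsub g g A = row_perm p (col_perm p A).
  by apply/matrixP => i j; rewrite !mxE !permE.
rewrite row_permE col_permE !det_mulmx !det_perm odd_permV.
by rewrite mulrCA -signr_addb addbb mulr1.
Qed.

Definition rowmix n (A B : 'M[R]_n) (J : {set 'I_n}) : 'M[R]_n :=
  \matrix_(i, j) if i \in J then B i j else A i j.

Lemma det_addmx_rowmix n (A B : 'M[R]_n) :
  \det (A + B) = \sum_(J : {set 'I_n}) \det (rowmix A B J).
Proof.
rewrite /determinant.
under eq_bigr => s _.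
  rewrite (eq_bigr (fun i => B i (s i) + A i (s i))); last by move=> i _; rewrite !mxE addrC.
  rewrite bigA_distr big_distrr /=.
  over.
rewrite exchange_big /=; apply: eq_bigr => J _; apply: eq_bigr => s _.
by congr (_ * _); apply: eq_bigr => i _; rewrite !mxE.
Qed.

End Det.

Section Det2.
Variable R : comNzRingType.

Definition gpminor n (P : 'M[R]_n) (S : {set 'I_n}) : R :=
  \det (\matrix_(k < #|S|, l < #|S|) P (enum_val k) (enum_val l)).

Definition padmx n (A : 'M[R]_n) (S : {set 'I_n}) : 'M[R]_n :=
  \matrix_(i, j) if i \in S then A i j else (i == j)%:R.

Lemma det_padmx n (A : 'M[R]_n) (S : {set 'I_n}) :
  \det (padmx A S) = gpminor A S.
Proof.
pose g (k : 'I_(#|S| + #|~: S|)) : 'I_n :=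
  match split k with inl a => enum_val a | inr b => enum_val b end.
have gl a : g (lshift _ a) = enum_val a.
  by rewrite /g (unsplitK (inl _ a)).
have gr b : g (rshift _ b) = enum_val b.
  by rewrite /g (unsplitK (inr _ b)).
have ginj : injective g.
  move=> k1 k2; rewrite -[k1]splitK -[k2]splitK.
  case: (split k1) => [a1|b1]; case: (split k2) => [a2|b2] /=;
    rewrite ?gl ?gr.
  - by move/enum_val_inj ->.
  - move=> e; have := enum_valP a1; have := enum_valP b2.
    by rewrite e inE => /negP.
  - move=> e; have := enum_valP a2; have := enum_valP b1.
    by rewrite e inE => /negP.
  - by move/enum_val_inj ->.
have e : (#|S| + #|~: S| = n)%N by rewrite cardsC card_ord.
rewrite -(det_mxsub_inj (padmx A S) e ginj).
rewrite -[mxsub _ _ _]submxK.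
have -> : dlsubmx (mxsub g g (padmx A S)) = 0.
  apply/matrixP => i j; rewrite !mxE gl gr.
  have := enum_valP i; rewrite inE => /negPf ->.
  case: eqP => // ej; have := enum_valP j; have := enum_valP i.
  by rewrite ej inE => /negP.
rewrite det_ublock.
have -> : drsubmx (mxsub g g (padmx A S)) = 1%:M.
  apply/matrixP => i j; rewrite !mxE !gr.
  have := enum_valP i; rewrite inE => /negPf ->.
  by rewrite (inj_eq enum_val_inj).
rewrite det1 mulr1 /gpminor; congr (\det _).
apply/matrixP => i j; rewrite !mxE !gl.
by rewrite enum_valP.
Qed.

End Det2.

Section Det3.
Variable R : comNzRingType.

Lemma det_add_diag n (A : 'M[R]_n) (d : 'rV[R]_n) :
  \det (A + diag_mx d) =
  \sum_(S : {set 'I_n}) (\prod_(k in ~: S) d 0 k) * gpminor A S.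
Proof.
rewrite det_addmx_rowmix.
rewrite (reindex_inj (@setC_inj _)) /=.
apply: eq_bigr => S _.
have -> : rowmix A (diag_mx d) (~: S) =
   diag_mx (\row_k if k \in ~: S then d 0 k else 1) *m padmx A S.
  apply/matrixP => i j; rewrite mul_diag_mx !mxE.
  case: ifP => iS; rewrite inE in iS.
    by rewrite (negPf iS) mulr_natr.
  by move/negbFE: iS => ->; rewrite mul1r.
rewrite det_mulmx det_diag det_padmx; congr (_ * _).
rewrite [RHS]big_mkcond /=; apply: eq_bigr => k _; by rewrite mxE.
Qed.

End Det3.

Section Rank.
Variable F : fieldType.

Lemma det_rank_lt n (M : 'M[F]_n) : (\rank M < n)%N -> \det M = 0.
Proof.
move=> h; apply/eqP; apply: contraLR h => h; rewrite -leqNgt.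
by rewrite mxrank_unit // unitmxE unitfE.
Qed.

Lemma gpminor_rank n (P : 'M[F]_n) (S : {set 'I_n}) :
  (\rank P < #|S|)%N -> gpminor P S = 0.
Proof.
move=> h; apply: det_rank_lt.
have -> : (\matrix_(k < #|S|, l < #|S|) P (enum_val k) (enum_val l)) =
   rowsub enum_val 1%:M *m P *m colsub enum_val 1%:M.
  by rewrite mul_rowsub_mx mul1mx mulmx_colsub mulmx1; apply/matrixP => i j; rewrite !mxE.
apply: leq_ltn_trans h; apply: leq_trans (mxrankM_maxl _ _) _.
exact: mxrankM_maxr.
Qed.

Lemma rank_addmx_le m n (A B : 'M[F]_(m, n)) : (\rank (A + B)%R <= \rank A + \rank B)%N.
Proof.
have h : (\rank (A + B)%MS <= \rank A + \rank B)%N by case: (mxrank_adds_leqif A B).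
apply: leq_trans h; apply: mxrankS.
first [exact: submx_refl | exact: (addmx_sub_adds (submx_refl A) (submx_refl B))].
Qed.

Lemma rowmix_rank n (A B : 'M[F]_n) (J : {set 'I_n}) :
  (\rank B < #|J|)%N -> \det (rowmix A B J) = 0.
Proof.
move=> h; apply: det_rank_lt.
pose C1 : 'M[F]_(n, #|~: J|) := \matrix_(i, k) (i == enum_val k)%:R.
have hC : C1 *m C1^T = diag_mx (\row_k (k \in ~: J)%:R).
  apply/matrixP => i k; rewrite !mxE.
  case: (boolP (i \in ~: J)) => hi.
    rewrite (bigD1 (enum_rank_in hi i)) //= big1.
      rewrite !mxE enum_rankK_in // eqxx mul1r addr0.
      by rewrite eq_sym.
    move=> l hl; rewrite !mxE; case: eqP => [ei|]; last by rewrite mul0r.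
    by case/eqP: hl; apply: enum_val_inj; rewrite enum_rankK_in.
  rewrite big1 ?(negPf hi) ?mul0rn //= => l _; rewrite !mxE.
  case: eqP => [ei|]; last by rewrite mul0r.
  by case/negP: hi; rewrite ei enum_valP.
have -> : rowmix A B J =
   diag_mx (\row_k (k \in J)%:R) *m B + (C1 *m C1^T) *m A.
  rewrite hC; apply/matrixP => i j; rewrite !mul_diag_mx !mxE inE.
  by case: (i \in J); rewrite /= ?mul1r ?mul0r ?addr0 ?add0r.
have h0 := rank_addmx_le (diag_mx (\row_k (k \in J)%:R) *m B) (C1 *m C1^T *m A).
have h1 : (\rank (diag_mx (\row_k (k \in J)%:R) *m B) <= \rank B)%N by exact: mxrankM_maxr.
have h2 : (\rank (C1 *m C1^T *m A) <= #|~: J|)%N.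
  apply: leq_trans (mxrankM_maxl _ _) _; apply: leq_trans (mxrankM_maxl _ _) _.
  exact: rank_leq_col.
have e : (#|J| + #|~: J| = n)%N by rewrite cardsC card_ord.
apply: (leq_ltn_trans h0); apply: (leq_ltn_trans (leq_add h1 h2)).
by rewrite -[X in (_ < X)%N]e ltn_add2r.
Qed.
End Rank.

Section Poly.
Variable F : fieldType.

Definition rcol (R : pzRingType) n (P : 'M[R]_n) (i : 'I_n) (c : 'cV[R]_n) : 'M[R]_n :=
  \matrix_(k, l) (if l == i then c k 0 else P k l).

Lemma cramer (R : comNzRingType) n (Q : 'M[R]_n) i (v : 'cV[R]_n) :
  \det (rcol Q i v) = (\adj Q *m v) i 0.
Proof.
rewrite (expand_det_col _ i) !mxE; apply: eq_bigr => k _.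
rewrite !mxE eqxx mulrC; congr (_ * _).
rewrite /cofactor; congr (_ * \det _).
apply/matrixP => a b; rewrite !mxE; case: eqP => // h.
by have := neq_lift i b; rewrite h eqxx.
Qed.

Lemma gpminor_map n (P : 'M[F]_n) S :
  gpminor (map_mx polyC P) S = (gpminor P S)%:P.
Proof.
rewrite /gpminor -det_map_mx; congr (\det _).
by apply/matrixP => a b; rewrite !mxE.
Qed.

Lemma coef_det_Xdiag n (P : 'M[F]_n) (U : {set 'I_n}) (a : nat) :
  (\det (map_mx polyC P + diag_mx (\row_k ('X *+ (k \in U)))))`_a =
  \sum_(S : {set 'I_n} | (#|~: S| == a) && (~: S \subset U)) gpminor P S.
Proof.
rewrite det_add_diag coef_sum [RHS]big_mkcond /=; apply: eq_bigr => S _.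
rewrite gpminor_map.
have -> : \prod_(k in ~: S) (\row_k ('X *+ (k \in U)) : 'rV[{poly F}]_n) 0 k =
          if ~: S \subset U then 'X ^+ #|~: S| else 0.
  case: (boolP (~: S \subset U)) => hS.
    rewrite -prodr_const; apply: eq_bigr => k hk; rewrite mxE.
    by rewrite (subsetP hS k hk).
  have [k hk hkU] : exists2 k, k \in ~: S & k \notin U.
    by apply/subsetPn.
  by rewrite (bigD1 k) //= mxE (negPf hkU) mulr0n mul0r.
case: (~: S \subset U); last by rewrite mul0r coef0 andbF.
by rewrite andbT mulrC coefCM coefXn eq_sym; case: eqP; rewrite ?mulr1 ?mulr0.
Qed.
End Poly.

Section CT.
Variable C : numClosedFieldType.

Lemma ctmxM m n p (A : 'M[C]_(m, n)) (B : 'M[C]_(n, p)) :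
  ctmx (A *m B) = ctmx B *m ctmx A.
Proof. by rewrite /ctmx map_mxM trmx_mul. Qed.

Lemma ctmxK m n (A : 'M[C]_(m, n)) : ctmx (ctmx A) = A.
Proof. by apply/matrixP => i j; rewrite /ctmx !mxE conjCK. Qed.

Lemma ctmx0 m n : ctmx (0 : 'M[C]_(m, n)) = 0.
Proof. by apply/matrixP => i j; rewrite /ctmx !mxE conjC0. Qed.

Lemma hpd_unit n (M : 'M[C]_n) : hpd M -> M \in unitmx.
Proof.
case=> hM hpos; rewrite unitmxE unitfE; apply/negP => /det0P [v v0 vM].
have x0 : ctmx v != 0.
  by apply: contra v0 => /eqP h; rewrite -[v]ctmxK h ctmx0.
have := hpos _ x0; rewrite ctmxK vM mul0mx mxE.
by rewrite ltxx.
Qed.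

End CT.

Section Pencil.
Variable F : fieldType.

Lemma det_proj_pencil n r (W V : 'M[F]_n) :
  (\rank W <= r)%N -> (\rank V <= n - r)%N -> W + V = 1%:M -> (r <= n)%N ->
  \det (map_mx polyC W + 'X *: map_mx polyC V) = 'X ^+ (n - r).
Proof.
move=> rW rV WV rn.
pose s := \sum_(J : {set 'I_n} | #|J| == (n - r)%N) \det (rowmix W V J).
have E : \det (map_mx polyC W + 'X *: map_mx polyC V) = 'X ^+ (n - r) * s%:P.
  rewrite det_addmx_rowmix.
  transitivity (\sum_(J : {set 'I_n}) 'X ^+ #|J| * (\det (rowmix W V J))%:P).
    apply: eq_bigr => J _.
    have -> : rowmix (map_mx polyC W) ('X *: map_mx polyC V) J =
      diag_mx (\row_k (if k \in J then 'X else 1)) *m map_mx polyC (rowmix W V J).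
      apply/matrixP => a b; rewrite mul_diag_mx !mxE.
      by case: (a \in J); rewrite ?mul1r.
    rewrite det_mulmx det_diag det_map_mx; congr (_ * _).
    rewrite (eq_bigr (fun k => if k \in J then 'X else 1)); last by move=> k _; rewrite mxE.
    by rewrite -big_mkcond prodr_const.
  rewrite (bigID (fun J : {set 'I_n} => #|J| == (n - r)%N)) /= [X in _ + X]big1 ?addr0.
    rewrite /s rmorph_sum mulr_sumr; apply: eq_bigr => J /eqP ->; done.
  move=> J hJ; suff -> : \det (rowmix W V J) = 0 by rewrite mulr0.
  have hc : (#|J| + #|~: J| = n)%N by rewrite cardsC card_ord.
  case: (ltngtP #|J| (n - r)) hJ => // h _.
    have -> : rowmix W V J = rowmix V W (~: J).
      by apply/matrixP => a b; rewrite !mxE inE; case: (a \in J).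
    apply: rowmix_rank; lia.
  apply: rowmix_rank; lia.
have s1 : s = 1.
  have := congr1 (horner_eval 1) E.
  rewrite -det_map_mx !horner_evalE hornerM hornerXn hornerC expr1n mul1r => <-.
  have -> : map_mx (horner_eval 1) (map_mx polyC W + 'X *: map_mx polyC V) = 1%:M.
    rewrite -WV; apply/matrixP => a b; rewrite !mxE !horner_evalE.
    by rewrite hornerD hornerM hornerX !hornerC mul1r.
  by rewrite det1.
by rewrite E s1 mulr1.
Qed.

End Pencil.
End Helpers.
Import Helpers.

Theorem theorem2p4 (C : numClosedFieldType) (m n r : nat)
  (M : 'M[C]_m) (N : 'M[C]_n) (A : 'M[C]_(m, n)) (Aplus : 'M[C]_(n, m)) :
  hpd M -> hpd N -> \rank A = r -> (r < minn m n)%N ->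
  is_wmp_inverse M N A Aplus ->
  let Ash := invmx N *m ctmx A *m M in
  forall (i : 'I_n) (j : 'I_m),
    Aplus i j =
      (\sum_(beta : {set 'I_n} | (#|beta| == r) && (i \in beta))
          pminor (replace_col (Ash *m A) i (col j Ash)) beta)
      / (\sum_(beta : {set 'I_n} | #|beta| == r) pminor (Ash *m A) beta).
Proof.
move=> hpM hpN hr hrmn; set X := Aplus; move=> [P1 P2 P3 P4] Ash i j.
have hM : ctmx M = M by case: hpM.
have hN : ctmx N = N by case: hpN.
have uM := hpd_unit hpM; have uN := hpd_unit hpN.
set P := Ash *m A.
have hPX : P *m X = Ash.
  have e1 : ctmx A *m (M *m A *m X) = ctmx A *m M.
    by rewrite -P3 !ctmxM hM !mulmxA -!ctmxM !mulmxA P1.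
  by rewrite /P /Ash -!mulmxA (mulmxA M) e1 !mulmxA.
have hXA : X *m A = invmx N *m ctmx A *m ctmx X *m N.
  have e : N *m X *m A = ctmx A *m ctmx X *m N.
    by rewrite -P4 !ctmxM hN mulmxA.
  have -> : invmx N *m ctmx A *m ctmx X *m N = invmx N *m (ctmx A *m ctmx X *m N).
    by rewrite !mulmxA.
  by rewrite -e -!mulmxA mulKmx.
pose W := X *m A.
have hWP : W *m P = P.
  have eA : ctmx A *m (ctmx X *m ctmx A) = ctmx A by rewrite -!ctmxM P1.
  rewrite /W hXA /P /Ash !mulmxA mulmxK //.
  by congr (_ *m _ *m _); rewrite -!mulmxA eA.
have hPW : P *m W = P by rewrite /W mulmxA hPX.
pose Y := X *m invmx M *m ctmx X *m N.
have hPY : P *m Y = W.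
  rewrite /Y !mulmxA hPX /Ash mulmxK // /W hXA.
have hWW : W *m W = W by rewrite /W !mulmxA P2.
have hrn : (r < n)%N by move: hrmn; rewrite leq_min => /andP[].
have rP : (\rank P <= r)%N by rewrite /P -hr mxrankM_maxr.
have rW : \rank W = r.
  apply/eqP; rewrite eqn_leq; apply/andP; split; first by rewrite /W -hr mxrankM_maxr.
  rewrite -hr; have <- : A *m W = A by rewrite /W mulmxA P1.
  exact: mxrankM_maxr.
pose V : 'M[C]_n := 1%:M - W.
have hVW : V *m W = 0 by rewrite /V mulmxBl mul1mx hWW subrr.
have hWV : W *m V = 0 by rewrite /V mulmxBr mulmx1 hWW subrr.
have hVV : V *m V = V by rewrite {1}/V mulmxBl mul1mx hWV subr0.
have hVP : V *m P = 0 by rewrite /V mulmxBl mul1mx hWP subrr.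
have hWVs : W + V = 1%:M by rewrite /V addrC subrK.
have rV : (\rank V <= n - r)%N.
  rewrite -rW -mxrank_ker; apply: mxrankS.
  by rewrite sub_kermx hVW.
have hVdef : V = 1%:M - W by [].
clearbody V.
pose mp := map_mx (@polyC C) : 'M[C]_n -> 'M[{poly C}]_n.
pose Q := mp P + diag_mx (\row_k ('X *+ (k \in [set: 'I_n]))).
have hQ : Q = (mp W + 'X *: mp V) *m (mp V + 'X *: mp W + mp P).
  rewrite mulmxDl !mulmxDr -!scalemxAl -!scalemxAr !scalerA /mp -!map_mxM.
  rewrite hWV hVW hWW hVV hWP hVP !map_mx0 /Q hVdef.
  apply/matrixP => a b; rewrite !mxE inE /=.
  case: eqP => [<-|_]; rewrite ?subr0 ?sub0r ?rmorphB ?rmorphN /=; ring.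
pose g := \det (mp V + 'X *: mp W + mp P).
have hdQ : \det Q = 'X ^+ (n - r) * g.
  rewrite hQ det_mulmx (@det_proj_pencil _ n r W V) //; [by rewrite rW | exact: ltnW].
have hg0 : g`_0 != 0.
  rewrite -horner_coef0 -horner_evalE -det_map_mx.
  have -> : map_mx (horner_eval 0) (mp V + 'X *: mp W + mp P) = V + P.
    apply/matrixP => a b; rewrite !mxE !horner_evalE.
    by rewrite !hornerE.
  have hPV : P *m V = 0 by rewrite hVdef mulmxBr mulmx1 hPW subrr.
  have : (V + P) *m (V + W *m Y) = 1%:M.
    rewrite mulmxDl !mulmxDr hVV hPV mulmxA hVW mul0mx mulmxA hPW hPY.
    by rewrite addr0 add0r addrC.
  by case/mulmx1_unit; rewrite unitmxE unitfE.
have cardC (S : {set 'I_n}) : #|~: S| = (n - #|S|)%N.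
  by have := cardsC S; rewrite card_ord; lia.
have hcS (S : {set 'I_n}) : (#|S| <= n)%N by have := cardsC S; rewrite card_ord; lia.
have hden : \sum_(beta : {set 'I_n} | #|beta| == r) gpminor P beta = g`_0.
  have := coef_det_Xdiag P [set: 'I_n] (n - r).
  rewrite -/Q hdQ coefXnM ltnn subnn => ->.
  apply: eq_bigl => S; rewrite subsetT andbT cardC.
  have := hcS S; move=> hS; apply/eqP/eqP; lia.
pose c := col j Ash. pose x := col j X.
have hc : c = P *m x by rewrite /c /x -hPX !colE mulmxA.
have hx : x = P *m (Y *m x) by rewrite mulmxA hPY /W /x !colE !mulmxA P2.
have hrc (v : 'cV[C]_n) : rcol Q i (map_mx polyC v) =
    mp (rcol P i v) + diag_mx (\row_k ('X *+ (k \in [set~ i]))).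
  apply/matrixP => k l; rewrite !mxE !inE; case: eqP => [->|hl].
    by case: eqP => [->|_]; rewrite ?eqxx ?mulr0n ?addr0.
  case: eqP => [e|_]; last by rewrite !mulr0n.
  by rewrite e (introF eqP hl).
have hdQn : (\det Q)`_(n - r) = g`_0 by rewrite hdQ coefXnM ltnn subnn.
have hnum : (\det (rcol Q i (map_mx polyC c)))`_(n - r) =
    \sum_(S : {set 'I_n} | (#|S| == r) && (i \in S)) gpminor (rcol P i c) S.
  rewrite hrc coef_det_Xdiag; apply: eq_bigl => S.
  rewrite cardC setCS sub1set; congr (_ && _).
  have := hcS S; move=> hS; apply/eqP/eqP; lia.
have hrk : (\rank (rcol P i x) <= r)%N.
  have -> : rcol P i x = P *m rcol 1%:M i (Y *m x).
    apply/matrixP => k l; rewrite [LHS]mxE [RHS]mxE; case: eqP => hl.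
      rewrite {1}hx [LHS]mxE; apply: eq_bigr => a _.
      by rewrite [rcol _ _ _ _ _]mxE hl eqxx.
    rewrite -{1}[P](mulmx1 P) [LHS]mxE; apply: eq_bigr => a _.
    by rewrite [rcol _ _ _ _ _]mxE (introF eqP hl).
  exact: leq_trans (mxrankM_maxl _ _) rP.
have hzero : (\det (rcol Q i (map_mx polyC x)))`_((n - r).-1) = 0.
  rewrite hrc coef_det_Xdiag big1 // => S /andP [hS _]; apply: gpminor_rank.
  rewrite cardC in hS; have := hcS S; move=> hS'.
  apply: leq_ltn_trans hrk _; lia.
have hdiag : diag_mx (\row_k ('X *+ (k \in [set: 'I_n]))) = 'X%:M :> 'M[{poly C}]_n.
  by apply/matrixP => a b; rewrite !mxE inE.
have hcr : \adj Q *m map_mx polyC c = \det Q *: map_mx polyC x - 'X *: (\adj Q *m map_mx polyC x).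
  have hQP : mp P = Q - 'X%:M by rewrite /Q hdiag addrK.
  rewrite hc map_mxM -/(mp P) hQP mulmxBl !mulmxBr mulmxA mul_adj_mx.
  by rewrite !mul_scalar_mx scalemxAr.
have key : (\det (rcol Q i (map_mx polyC c)))`_(n - r) = (\det Q)`_(n - r) * x i 0.
  rewrite cramer hcr.
  have -> : (\det Q *: map_mx polyC x - 'X *: (\adj Q *m map_mx polyC x)) i 0 =
     \det Q * (x i 0)%:P - 'X * (\adj Q *m map_mx polyC x) i 0 by rewrite !mxE.
  rewrite -cramer coefB coefMC coefXM.
  have -> : (n - r == 0)%N = false by apply/eqP; lia.
  by rewrite hzero subr0.
change (X i j = (\sum_(beta : {set 'I_n} | (#|beta| == r) && (i \in beta))
    gpminor (rcol P i c) beta) / (\sum_(beta : {set 'I_n} | #|beta| == r) gpminor P beta)).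
rewrite -hnum hden key hdQn /x mxE mulrC mulKf //.
Qed.
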